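(* Let $T\in S(\lambda,\mu)$ and let $\tau$ be a row-standard filling of shape $\lambda$ and content $\mu$ with $\mathrm{st}(\tau)=T$. Then $\tau$ can be obtained from $T$ by a finite sequence of admissible transpositions, and the minimum number of admissible transpositions in such a sequence is $\mathrm{inv}(\tau)$.
   Context: A shape is a partition $\lambda=(\lambda_1\ge\dots\ge\lambda_m\ge1)$ with $\lambda_i$ left-justified boxes in row $i$ (rows top to bottom, columns left to right). A content is $\mu=(\mu_1,\dots,\mu_M)$, all $\mu_i\ge1$, $\sum\mu_i=\sum\lambda_i$; a filling of content $\mu$ uses value $v$ exactly $\mu_v$ times; row-standard means rows strictly increase left to right. $S(\lambda,\mu)$: row-standard fillings with weakly increasing columns. Inversion pairs of a row-standard $\tau$: for a box $c$ and $r\ge1$ let $c^{(r)}$ be the box $r$ positions to its right, if it exists. For distinct boxes $c,c'$ in the same column with $\tau(c)<\tau(c')$, let $r\ge1$ be least such that one of $c^{(r)},c'^{(r)}$ does not exist or both exist with $\tau(c^{(r)})\ne\tau(c'^{(r)})$. $(c,c')$ is an inversion pair if either (one does not exist and $c$ lies below $c'$) or (both exist and $\tau(c^{(r)})>\tau(c'^{(r)})$); $\mathrm{inv}(\tau)$ is the number of inversion pairs. $\mathrm{st}(\tau)$: sort each column weakly increasingly. Height order: on the boxes of each column of a row-standard $\tau$ a total order $\blacktriangleleft$ is defined, column by column from right to left: for distinct boxes $c,c'$ in column $j$, if at least one of them has no box directly to its right then $c\blacktriangleleft c'$ iff $c$ is above $c'$; if both have right neighbours $b,b'$, then $c\blacktriangleleft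 c'$ iff $\tau(b)<\tau(b')$, or $\tau(b)=\tau(b')$ and $b\blacktriangleleft b'$ (in column $j+1$). The height of a box is its rank in this order within its column. A partial row transposition at two boxes $c,c'$ of column $j$ (in rows $i_1,i_2$) with $\tau(c)<\tau(c')$ and heights differing by exactly $1$ swaps the contents of rows $i_1$ and $i_2$ in columns $1,\dots,j$ (columns $>j$ unchanged); it is admissible if $\tau(c)$ and $\tau(c')$ are both smaller than the entries directly to the right of $c$ and of $c'$ (whenever these exist), i.e. the result is again row-standard. *)

(* Defs.v *)
(* Fillings are lists of rows (top to bottom), each row a
   list of values (left to right); boxes are 0-indexed (row i, column j). *)
From mathcomp Require Import all_boot.
Set Implicit Arguments. Unset Strict Implicit. Unset Printing Implicit Defensive.

Definition filling := seq (seq nat).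

Definition row (t : filling) (i : nat) : seq nat := nth [::] t i.
Definition ent (t : filling) (i j : nat) : nat := nth 0 (row t i) j.
Definition hasbox (t : filling) (i j : nat) : bool := (i < size t) && (j < size (row t i)).

Definition is_shape (lam : seq nat) : Prop :=
  sorted geq lam /\ all (fun x => 0 < x) lam.

Definition is_content (lam mu : seq nat) : Prop :=
  all (fun x => 0 < x) mu /\ sumn mu = sumn lam.

(* t is a filling of shape lam and content mu: values are 1..size mu,
   value v used exactly mu_v times (mu_v = nth 0 mu (v-1)) *)
Definition is_filling (lam mu : seq nat) (t : filling) : Prop :=
  map size t = lam /\
  all (fun x => (0 < x) && (x <= size mu)) (flatten t) /\
  (forall v, v < size mu -> count_mem v.+1 (flatten t) = nth 0 mu v).

Definition row_standard (t : filling) : Prop :=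
  all (fun r => sorted ltn r) t.

Definition col_weak (t : filling) : Prop :=
  forall i j, hasbox t i.+1 j -> ent t i j <= ent t i.+1 j.

Definition in_S (lam mu : seq nat) (t : filling) : Prop :=
  is_filling lam mu t /\ row_standard t /\ col_weak t.

Definition column (t : filling) (j : nat) : seq nat :=
  [seq nth 0 r j | r <- t & j < size r].

(* st(t): sort each column weakly increasingly (for partition shapes the
   rows having a box in column j are exactly the first ones) *)
Definition st (t : filling) : filling :=
  mkseq (fun i => mkseq (fun j => nth 0 (sort leq (column t j)) i) (size (row t i)))
        (size t).

(* Height order: hlt t fuel j i i' means box (i,j) <| box (i',j). *)
Fixpoint hlt_aux (t : filling) (fuel j i i' : nat) : bool :=
  match fuel with
  | 0 => false
  | f.+1 =>
      if ~~ hasbox t i j.+1 || ~~ hasbox t i' j.+1 then i < i'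
      else (ent t i j.+1 < ent t i' j.+1) ||
           ((ent t i j.+1 == ent t i' j.+1) && hlt_aux t f j.+1 i i')
  end.
Definition hlt (t : filling) (j i i' : nat) : bool :=
  hlt_aux t (size (row t i)) j i i'.

Definition height (t : filling) (i j : nat) : nat :=
  (count (fun i' => [&& i' != i, hasbox t i' j & hlt t j i' i]) (iota 0 (size t))).+1.

(* inversion test for boxes c=(i,j), c'=(i',j): at the least r >= 1 where
   one of c^(r), c'^(r) is missing or their entries differ *)
Fixpoint inv_aux (t : filling) (fuel j i i' : nat) : bool :=
  match fuel with
  | 0 => false
  | f.+1 =>
      if ~~ hasbox t i j.+1 || ~~ hasbox t i' j.+1 then i' < i  (* c below c' *)
      else if ent t i j.+1 != ent t i' j.+1 then ent t i' j.+1 < ent t i j.+1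
      else inv_aux t f j.+1 i i'
  end.
Definition inversion_pair (t : filling) (i i' j : nat) : bool :=
  [&& i != i', hasbox t i j, hasbox t i' j, ent t i j < ent t i' j &
      inv_aux t (size (row t i)) j i i'].

Definition inv_count (t : filling) : nat :=
  \sum_(i < size t) \sum_(i' < size t) \sum_(j < size (row t i)) inversion_pair t i i' j.

Definition prt (t : filling) (i1 i2 j : nat) : filling :=
  mkseq (fun k =>
    if k == i1 then take j.+1 (row t i2) ++ drop j.+1 (row t i1)
    else if k == i2 then take j.+1 (row t i1) ++ drop j.+1 (row t i2)
    else row t k) (size t).

Definition admissible_at (t : filling) (i1 i2 j : nat) : bool :=
  [&& (hasbox t i1 j.+1 ==> (ent t i1 j < ent t i1 j.+1) && (ent t i2 j < ent t i1 j.+1))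
    & (hasbox t i2 j.+1 ==> (ent t i1 j < ent t i2 j.+1) && (ent t i2 j < ent t i2 j.+1))].

Definition adm_step (s s' : filling) : Prop :=
  row_standard s /\
  exists i1 i2 j,
    [/\ [&& i1 != i2, hasbox s i1 j, hasbox s i2 j & ent s i1 j < ent s i2 j],
        (height s i1 j == (height s i2 j).+1) || (height s i2 j == (height s i1 j).+1),
        admissible_at s i1 i2 j & s' = prt s i1 i2 j].

Fixpoint reach (n : nat) (s s' : filling) : Prop :=
  match n with
  | 0 => s = s'
  | n'.+1 => exists s'', adm_step s s'' /\ reach n' s'' s'
  end.

(* Main.v *)
Require Import Defs.
From mathcomp Require Import all_boot zify.
From Stdlib Require Import Classical.
Set Implicit Arguments. Unset Strict Implicit. Unset Printing Implicit Defensive.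


Fixpoint keylt (s s' : seq nat) (i i' : nat) : bool :=
  match s, s' with
  | x :: s1, y :: s1' => (x < y) || ((x == y) && keylt s1 s1' i i')
  | _, _ => i < i'
  end.

Lemma keylt_irr s i : keylt s s i i = false.
Proof. elim: s => [|x s IH] /=; first by rewrite ltnn. by rewrite ltnn eqxx IH. Qed.

Lemma keylt_asym s s' i i' : keylt s s' i i' -> keylt s' s i' i = false.
Proof.
elim: s s' => [|x s IH] [|y s'] //=; try lia.
case: (ltngtP x y) => //= H; exact: IH.
Qed.

Lemma keylt_total s s' i i' : i != i' -> keylt s s' i i' || keylt s' s i' i.
Proof.
move=> ne; elim: s s' => [|x s IH] [|y s'] //=; try lia.
case: (ltngtP x y) => //=.
Qed.

Definition cst (s s' : seq nat) (i i' : nat) :=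
  ((size s < size s') ==> (i' < i)) && ((size s' < size s) ==> (i < i')).

Lemma keylt_trans s1 s2 s3 i1 i2 i3 :
  cst s1 s2 i1 i2 -> cst s2 s3 i2 i3 -> cst s1 s3 i1 i3 ->
  keylt s1 s2 i1 i2 -> keylt s2 s3 i2 i3 -> keylt s1 s3 i1 i3.
Proof.
rewrite /cst.
elim: s1 s2 s3 => [|x s1 IH] [|y s2] [|z s3] /=; try lia.
move=> C12 C23 C13.
have C12' : cst s1 s2 i1 i2 by rewrite /cst; lia.
have C23' : cst s2 s3 i2 i3 by rewrite /cst; lia.
have C13' : cst s1 s3 i1 i3 by rewrite /cst; lia.
case/orP => [H1|/andP[/eqP E1 H1]]; case/orP => [H2|/andP[/eqP E2 H2]].
- by rewrite (ltn_trans H1 H2).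
- by rewrite -E2 H1.
- by rewrite E1 H2.
- by rewrite E1 E2 eqxx (IH _ _ C12' C23' C13' H1 H2) orbT.
Qed.

Lemma keylt_cat_eq u x y i i' : keylt (u ++ x) (u ++ y) i i' = keylt x y i i'.
Proof. elim: u => //= a u ->. by rewrite ltnn ?eqxx. Qed.

Lemma keylt_cat_neq u w x y x' y' i i' i2 i2' : size u = size w -> u != w ->
  keylt (u ++ x) (w ++ y) i i' = keylt (u ++ x') (w ++ y') i2 i2'.
Proof.
elim: u w => [|a u IH] [|b w] //= [Hs] Hne.
case: (eqVneq a b) => [E|N].
- subst b. rewrite ltnn ?eqxx /=. apply: IH => //. by move: Hne; rewrite eqseq_cons eqxx.
- by rewrite !andFb.
Qed.

Lemma keylt_short_r u x v i i' : size v < size u -> keylt (u ++ x) v i i' = keylt u v i i'.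
Proof.
elim: u v => [|a u IH] [|b v] //= H; by rewrite IH.
Qed.

Lemma keylt_short_l u x v i i' : size v < size u -> keylt v (u ++ x) i i' = keylt v u i i'.
Proof.
elim: u v => [|a u IH] [|b v] //= H; by rewrite IH.
Qed.

Lemma keylt_idx s v i i' i2 i2' : (i < i') = (i2 < i2') -> keylt s v i i' = keylt s v i2 i2'.
Proof. move=> E; elim: s v => [|a s IH] [|b v] //=; by rewrite IH. Qed.

Lemma keylt_le_true s s' i i' : i < i' ->
  (forall k, k < minn (size s) (size s') -> nth 0 s k <= nth 0 s' k) -> keylt s s' i i'.
Proof.
move=> Hi; elim: s s' => [|x s IH] [|y s'] //= H.
have := H 0 ltac:(by rewrite minnSS); rewrite /= leq_eqVlt => /orP[/eqP->|->//].
rewrite ltnn eqxx /=. apply: IH => k Hk. have := H k.+1. rewrite minnSS ltnS /=. by apply.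
Qed.

Lemma keylt_le_false s s' i i' : i < i' ->
  (forall k, k < minn (size s) (size s') -> nth 0 s k <= nth 0 s' k) -> keylt s' s i' i = false.
Proof.
move=> Hi; elim: s s' => [|x s IH] [|y s'] //= H; try lia.
have := H 0 ltac:(by rewrite minnSS); rewrite /= leq_eqVlt => /orP[/eqP->|Hl].
- rewrite ltnn eqxx /=. apply: IH => k Hk. have := H k.+1. rewrite minnSS ltnS /=. by apply.
- rewrite ltnNge (ltnW Hl) /=. by rewrite eq_sym (ltn_eqF Hl).
Qed.


Definition suf (t : filling) i j := drop j.+1 (row t i).
Definition Lk (t : filling) j p q := keylt (suf t p j) (suf t q j) p q.
Definition shp (t : filling) := sorted geq (map size t).

Lemma row_oob t i : size t <= i -> row t i = [::].
Proof. by move=> H; rewrite /row nth_default. Qed.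

Lemma hasboxE t i j : hasbox t i j = (j < size (row t i)).
Proof. rewrite /hasbox; case: ltnP => // H. by rewrite row_oob. Qed.

Lemma hasbox_lt t i j : hasbox t i j -> i < size t.
Proof. by case/andP. Qed.

Lemma sufE t i j : suf t i j =
  if j.+1 < size (row t i) then ent t i j.+1 :: suf t i j.+1 else [::].
Proof.
rewrite /suf /ent; case: ltnP => H; first by rewrite (drop_nth 0 H).
by rewrite drop_oversize.
Qed.

Lemma hlt_aux_key t f j i i' : j < size (row t i) -> size (row t i) <= f + j ->
  hlt_aux t f j i i' = keylt (suf t i j) (suf t i' j) i i'.
Proof.
elim: f j => [|f IH] j H1 H2; first by lia.
rewrite /= !hasboxE (sufE t i) (sufE t i').
case: (ltnP j.+1 (size (row t i))) => Hi; case: (ltnP j.+1 (size (row t i'))) => Hi' //=.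
rewrite IH //; lia.
Qed.

Lemma inv_aux_key t f j i i' : j < size (row t i) -> size (row t i) <= f + j ->
  inv_aux t f j i i' = keylt (suf t i' j) (suf t i j) i' i.
Proof.
elim: f j => [|f IH] j H1 H2; first by lia.
rewrite /= !hasboxE (sufE t i) (sufE t i').
case: (ltnP j.+1 (size (row t i))) => Hi; case: (ltnP j.+1 (size (row t i'))) => Hi' //=.
case: (ltngtP (ent t i j.+1) (ent t i' j.+1)) => H //=.
rewrite IH //; lia.
Qed.

Lemma hlt_key t i i' j : hasbox t i j -> hlt t j i i' = Lk t j i i'.
Proof. rewrite hasboxE => H. rewrite /hlt hlt_aux_key //; lia. Qed.

Lemma inv_key t i i' j : inversion_pair t i i' j =
  [&& i != i', hasbox t i j, hasbox t i' j, ent t i j < ent t i' j & Lk t j i' i].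
Proof.
rewrite /inversion_pair; case: (i != i') => //=; case Hb: (hasbox t i j) => //=.
move: Hb; rewrite hasboxE => Hb.
by rewrite inv_aux_key //; lia.
Qed.

Lemma height_key t i j : height t i j =
  (count (fun i' => [&& i' != i, hasbox t i' j & Lk t j i' i]) (iota 0 (size t))).+1.
Proof.
rewrite /height; congr S; apply: eq_count => i' /=.
case: (i' != i) => //=; case Hb: (hasbox t i' j) => //=. by rewrite hlt_key.
Qed.

Lemma shp_le t i i' : shp t -> i <= i' -> size (row t i') <= size (row t i).
Proof.
move=> Hs Hii.
case: (ltnP i' (size t)) => Hi'; last by rewrite (row_oob Hi').
have tr : transitive geq by move=> a b c /= ? ?; lia.
have := sorted_leq_nth tr (fun x => leqnn x) 0 Hs.
move=> /(_ i i'); rewrite !inE size_map => /(_ (leq_ltn_trans Hii Hi') Hi' Hii).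
by rewrite /= !(nth_map [::]) //; apply: leq_ltn_trans Hi'.
Qed.

Lemma box_below t i i' j : shp t -> i <= i' -> hasbox t i' j -> hasbox t i j.
Proof.
move=> Hs Hii; rewrite !hasboxE => H. have := shp_le Hs Hii. lia.
Qed.

Lemma box_cst t p q j : shp t -> hasbox t p j -> hasbox t q j ->
  cst (suf t p j) (suf t q j) p q.
Proof.
rewrite /cst /suf !size_drop !hasboxE => Hs Hp Hq.
case: (ltngtP p q) => H.
- have := shp_le Hs (ltnW H); lia.
- have := shp_le Hs (ltnW H); lia.
- subst; lia.
Qed.

Lemma Lk_trans t j p q r : shp t -> hasbox t p j -> hasbox t q j -> hasbox t r j ->
  Lk t j p q -> Lk t j q r -> Lk t j p r.
Proof.
move=> Hs Hp Hq Hr; apply: keylt_trans; exact: box_cst.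
Qed.

Lemma Lk_total t j p q : p != q -> Lk t j p q || Lk t j q p.
Proof. exact: keylt_total. Qed.

Lemma Lk_asym t j p q : Lk t j p q -> Lk t j q p = false.
Proof. exact: keylt_asym. Qed.

Lemma Lk_irr t j p : Lk t j p p = false.
Proof. exact: keylt_irr. Qed.


Definition sw (a b x : nat) := if x == a then b else if x == b then a else x.

Lemma sw_inv a b x : a != b -> sw a b (sw a b x) = x.
Proof.
rewrite /sw => ne; have ne' : b != a by rewrite eq_sym.
case: (eqVneq x a) => [->|xa]; first by rewrite !(eqxx, negbTE ne').
case: (eqVneq x b) => [->|xb]; first by rewrite eqxx.
by rewrite (negbTE xa) (negbTE xb).
Qed.

Lemma sw_inj a b : a != b -> injective (sw a b).
Proof. move=> ne x y E. by rewrite -(sw_inv x ne) E sw_inv. Qed.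

Lemma sw_id a b x : x != a -> x != b -> sw a b x = x.
Proof. by rewrite /sw => /negbTE-> /negbTE->. Qed.

Lemma sw_lt a b n x : a < n -> b < n -> (sw a b x < n) = (x < n).
Proof.
rewrite /sw => Ha Hb; case: (eqVneq x a) => [->|_]; first by rewrite Ha Hb.
case: (eqVneq x b) => [->|_] //; by rewrite Ha Hb.
Qed.

Lemma row_prt t a b j i : a < size t -> b < size t -> a != b ->
  row (prt t a b j) i =
  if i == a then take j.+1 (row t b) ++ drop j.+1 (row t a)
  else if i == b then take j.+1 (row t a) ++ drop j.+1 (row t b) else row t i.
Proof.
move=> Ha Hb ne; rewrite {1}/row /prt.
case: (ltnP i (size t)) => H; first by rewrite nth_mkseq.
rewrite nth_default ?size_mkseq //.
have -> : (i == a) = false by apply/eqP; lia.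
have -> : (i == b) = false by apply/eqP; lia.
by rewrite row_oob.
Qed.

Lemma size_prt t a b j : size (prt t a b j) = size t.
Proof. by rewrite size_mkseq. Qed.

Definition boxes2 t a b j := [&& hasbox t a j, hasbox t b j & a != b].

Lemma rowsz_prt t a b j i : boxes2 t a b j ->
  size (row (prt t a b j) i) = size (row t i).
Proof.
case/and3P => Ha Hb ne; rewrite row_prt ?(hasbox_lt Ha) ?(hasbox_lt Hb) //.
move: Ha Hb; rewrite !hasboxE => Ha Hb.
case: (eqVneq i a) => [->|ia]; first by rewrite size_cat size_takel ?size_drop; lia.
case: (eqVneq i b) => [->|ib] //; by rewrite size_cat size_takel ?size_drop; lia.
Qed.

Lemma take_prt t a b j i : boxes2 t a b j ->
  take j.+1 (row (prt t a b j) i) = take j.+1 (row t (sw a b i)).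
Proof.
case/and3P => Ha Hb ne; rewrite row_prt ?(hasbox_lt Ha) ?(hasbox_lt Hb) //.
move: Ha Hb; rewrite !hasboxE => Ha Hb.
rewrite /sw; case: (eqVneq i a) => [_|ia]; first by rewrite take_size_cat // size_takel.
case: (eqVneq i b) => [_|ib] //; by rewrite take_size_cat // size_takel.
Qed.

Lemma drop_prt t a b j i : boxes2 t a b j ->
  drop j.+1 (row (prt t a b j) i) = drop j.+1 (row t i).
Proof.
case/and3P => Ha Hb ne; rewrite row_prt ?(hasbox_lt Ha) ?(hasbox_lt Hb) //.
move: Ha Hb; rewrite !hasboxE => Ha Hb.
case: (eqVneq i a) => [->|ia]; first by rewrite drop_cat size_takel // ltnn subnn drop0.
case: (eqVneq i b) => [->|ib] //; by rewrite drop_cat size_takel // ltnn subnn drop0.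
Qed.

Lemma hasbox_prt t a b j i k : boxes2 t a b j -> hasbox (prt t a b j) i k = hasbox t i k.
Proof. move=> H; by rewrite !hasboxE rowsz_prt. Qed.

Lemma hasbox_sw t a b j i k : boxes2 t a b j -> k <= j -> hasbox t (sw a b i) k = hasbox t i k.
Proof.
case/and3P; rewrite !hasboxE => Ha Hb ne Hk.
rewrite /sw; case: (eqVneq i a) => [->|ia]; first by lia.
case: (eqVneq i b) => [->|ib] //; lia.
Qed.

Lemma ent_prt_le t a b j i k : boxes2 t a b j -> k <= j ->
  ent (prt t a b j) i k = ent t (sw a b i) k.
Proof.
move=> H Hk; rewrite /ent -(nth_take 0 (_ : k < j.+1)) // take_prt //.
by rewrite nth_take.
Qed.

Lemma nth_gt (r : seq nat) j k : j < k -> nth 0 r k = nth 0 (drop j.+1 r) (k - j.+1).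
Proof. move=> H; rewrite nth_drop; congr nth; lia. Qed.

Lemma ent_prt_gt t a b j i k : boxes2 t a b j -> j < k ->
  ent (prt t a b j) i k = ent t i k.
Proof. move=> H Hk; by rewrite /ent !(nth_gt _ Hk) drop_prt. Qed.

Lemma suf_prt_ge t a b j i k : boxes2 t a b j -> j <= k ->
  suf (prt t a b j) i k = suf t i k.
Proof.
move=> H Hk; rewrite /suf.
have E : forall r : seq nat, drop k.+1 r = drop (k - j) (drop j.+1 r).
  move=> r; rewrite drop_drop; congr drop; lia.
by rewrite !E drop_prt.
Qed.

Definition pre t i k j := drop k.+1 (take j.+1 (row t i)).

Lemma suf_split t i k j : k <= j -> suf t i k = pre t i k j ++ suf t i j.
Proof.
move=> Hk; rewrite /suf /pre.
rewrite -{1}(cat_take_drop (j - k) (drop k.+1 (row t i))) take_drop drop_drop.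
by have -> : j - k + k.+1 = j.+1 by lia.
Qed.

Lemma suf_prt_le t a b j i k : boxes2 t a b j -> k <= j ->
  suf (prt t a b j) i k = pre t (sw a b i) k j ++ suf t i j.
Proof.
move=> H Hk; rewrite (suf_split _ _ Hk) suf_prt_ge //.
by rewrite /pre take_prt.
Qed.

Lemma size_pre t i k j : hasbox t i j -> size (pre t i k j) = j - k.
Proof. rewrite hasboxE /pre size_drop => H; rewrite size_takel; lia. Qed.

Lemma size_pre_short t i k j : k < j -> ~~ hasbox t i j -> size (pre t i k j) < j - k.
Proof.
rewrite hasboxE /pre size_drop -leqNgt => Hk H; rewrite take_oversize; lia.
Qed.

Lemma suf_nobox t i j : ~~ hasbox t i j -> suf t i j = [::].
Proof. rewrite hasboxE -leqNgt /suf => H; rewrite drop_oversize //; lia. Qed.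

Lemma pre_last t i k j : k < j -> hasbox t i j -> nth 0 (pre t i k j) (j - k.+1) = ent t i j.
Proof.
rewrite hasboxE /pre /ent => Hk H; rewrite nth_drop nth_take; first congr nth; lia.
Qed.


Definition adjP t j a b := forall r, hasbox t r j -> r != a -> r != b ->
  (Lk t j r a = Lk t j r b) /\ (Lk t j a r = Lk t j b r).

Lemma sw_a a b : sw a b a = b.
Proof. by rewrite /sw eqxx. Qed.
Lemma sw_b a b : a != b -> sw a b b = a.
Proof. by rewrite /sw eq_sym => /negbTE->; rewrite eqxx. Qed.

Lemma Lk_sw_j t j a b p q : adjP t j a b -> a != b -> p != q ->
  hasbox t p j -> hasbox t q j ->
  ~~ ((p == a) && (q == b) || (p == b) && (q == a)) ->
  Lk t j p q = Lk t j (sw a b p) (sw a b q).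
Proof.
move=> Hadj ne pq Bp Bq C.
case: (eqVneq p a) => [Ep|pa].
- subst p.
  have qb : q != b by apply/negP => /eqP E; move: C; rewrite E !eqxx.
  have qa : q != a by rewrite eq_sym.
  rewrite (sw_id qa qb) /sw eqxx.
  by have [_ ->] := Hadj q Bq qa qb.
case: (eqVneq p b) => [Ep|pb].
- subst p.
  have qa : q != a by apply/negP => /eqP E; move: C; rewrite E !eqxx orbT.
  have qb : q != b by rewrite eq_sym.
  rewrite (sw_id qa qb) /sw eqxx (negbTE pa).
  by have [_ ->] := Hadj q Bq qa qb.
rewrite (sw_id pa pb).
case: (eqVneq q a) => [Eq|qa].
- subst q. rewrite /sw eqxx. by have [-> _] := Hadj p Bp pa pb.
case: (eqVneq q b) => [Eq|qb].
- subst q. rewrite /sw eqxx (negbTE qa). by have [-> _] := Hadj p Bp pa pb.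
by rewrite (sw_id qa qb).
Qed.

Lemma nobox_gt t p q j : shp t -> hasbox t p j -> ~~ hasbox t q j -> p < q.
Proof.
move=> Hs Bp Bq; case: (ltnP p q) => // H.
by rewrite (box_below Hs H Bp) in Bq.
Qed.

Lemma box_ab t a b j x : boxes2 t a b j -> ~~ hasbox t x j -> (x != a) && (x != b).
Proof.
case/and3P => Ha Hb _ Hx. apply/andP; split; apply/eqP => E; subst; by rewrite ?Ha ?Hb in Hx.
Qed.

Lemma Lk_prt_lt t a b j k p q : shp t -> boxes2 t a b j -> ent t a j != ent t b j ->
  adjP t j a b -> k < j -> hasbox t p k -> hasbox t q k -> p != q ->
  Lk (prt t a b j) k p q = Lk t k (sw a b p) (sw a b q).
Proof.
move=> Hs B2 Eab Hadj Hk Bpk Bqk pq.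
have Hk' : k <= j by apply: ltnW.
have ne : a != b by case/and3P: B2.
rewrite /Lk !suf_prt_le // (@suf_split t (sw a b p) k j Hk') (@suf_split t (sw a b q) k j Hk').
case Bp: (hasbox t p j); case Bq: (hasbox t q j).
- have Bsp : hasbox t (sw a b p) j by rewrite (hasbox_sw _ B2).
  have Bsq : hasbox t (sw a b q) j by rewrite (hasbox_sw _ B2).
  case: (eqVneq (pre t (sw a b p) k j) (pre t (sw a b q) k j)) => E.
  + rewrite E !keylt_cat_eq. apply: Lk_sw_j => //.
    apply/negP => /orP[/andP[/eqP Pa /eqP Qb]|/andP[/eqP Pb /eqP Qa]].
    * subst. move: E; rewrite sw_a sw_b // => E.
      case/and3P: B2 => Ha Hb _.
      have := pre_last Hk Ha. rewrite -E pre_last //. by move=> H; rewrite H eqxx in Eab.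
    * subst. move: E; rewrite sw_a sw_b // => E.
      case/and3P: B2 => Ha Hb _.
      have := pre_last Hk Ha. rewrite E pre_last //. by move=> H; rewrite H eqxx in Eab.
  + apply: keylt_cat_neq => //. by rewrite !size_pre.
- have [qa qb] : (q != a) /\ (q != b) by apply/andP; apply: (box_ab B2); rewrite Bq.
  rewrite (sw_id qa qb) (suf_nobox (negbT Bq)) !cats0.
  have Bsp : hasbox t (sw a b p) j by rewrite (hasbox_sw _ B2).
  have Hsz : size (pre t q k j) < size (pre t (sw a b p) k j).
    by rewrite (size_pre _ Bsp) size_pre_short // Bq.
  rewrite !keylt_short_r //. apply: keylt_idx.
  by rewrite (nobox_gt Hs Bp (negbT Bq)) (nobox_gt Hs Bsp (negbT Bq)).
- have [pa pb] : (p != a) /\ (p != b) by apply/andP; apply: (box_ab B2); rewrite Bp.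
  rewrite (sw_id pa pb) (suf_nobox (negbT Bp)) !cats0.
  have Bsq : hasbox t (sw a b q) j by rewrite (hasbox_sw _ B2).
  have Hsz : size (pre t p k j) < size (pre t (sw a b q) k j).
    by rewrite (size_pre _ Bsq) size_pre_short // Bp.
  rewrite !keylt_short_l //. apply: keylt_idx.
  by rewrite ltnNge (ltnW (nobox_gt Hs Bq (negbT Bp))) ltnNge (ltnW (nobox_gt Hs Bsq (negbT Bp))).
- have [pa pb] : (p != a) /\ (p != b) by apply/andP; apply: (box_ab B2); rewrite Bp.
  have [qa qb] : (q != a) /\ (q != b) by apply/andP; apply: (box_ab B2); rewrite Bq.
  by rewrite (sw_id pa pb) (sw_id qa qb).
Qed.


Lemma sw_neq a b p q : a != b -> (sw a b p != sw a b q) = (p != q).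
Proof. move=> ne; by rewrite (inj_eq (sw_inj ne)). Qed.

Lemma IP_prt_lt t a b j k p q : shp t -> boxes2 t a b j -> ent t a j != ent t b j ->
  adjP t j a b -> k < j ->
  inversion_pair (prt t a b j) p q k = inversion_pair t (sw a b p) (sw a b q) k.
Proof.
move=> Hs B2 Eab Hadj Hk.
have ne : a != b by case/and3P: B2.
rewrite !inv_key sw_neq // !hasbox_prt // !(hasbox_sw _ B2) ?(ltnW Hk) //.
rewrite !ent_prt_le ?(ltnW Hk) //.
case pq: (p != q) => //=; case Bp: (hasbox t p k) => //=; case Bq: (hasbox t q k) => //=.
rewrite (Lk_prt_lt Hs B2 Eab Hadj Hk Bq Bp) //. by rewrite eq_sym.
Qed.

Lemma Lk_prt_ge t a b j k p q : boxes2 t a b j -> j <= k ->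
  Lk (prt t a b j) k p q = Lk t k p q.
Proof. move=> B2 Hk; by rewrite /Lk !suf_prt_ge. Qed.

Lemma IP_prt_gt t a b j k p q : boxes2 t a b j -> j < k ->
  inversion_pair (prt t a b j) p q k = inversion_pair t p q k.
Proof.
move=> B2 Hk; rewrite !inv_key !hasbox_prt // !ent_prt_gt // Lk_prt_ge // ltnW //.
Qed.

Lemma IP_prt_j t a b j p q : boxes2 t a b j ->
  inversion_pair (prt t a b j) p q j =
  [&& p != q, hasbox t p j, hasbox t q j, ent t (sw a b p) j < ent t (sw a b q) j & Lk t j q p].
Proof.
move=> B2; by rewrite inv_key !hasbox_prt // !ent_prt_le // Lk_prt_ge.
Qed.

Definition invk t k := \sum_(p < size t) \sum_(q < size t) inversion_pair t p q k.

Lemma inv_cols t N : (forall i, size (row t i) <= N) -> inv_count t = \sum_(k < N) invk t k.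
Proof.
move=> HN; rewrite /inv_count /invk.
have E : forall i i' : 'I_(size t),
  \sum_(k < size (row t i)) inversion_pair t i i' k = \sum_(k < N) inversion_pair t i i' k.
  move=> i i'; rewrite (big_ord_widen N (fun k : nat => (inversion_pair t i i' k : nat)) (HN i)).
  rewrite big_mkcond /=; apply: eq_bigr => k _.
  case: ltnP => // H; rewrite /inversion_pair hasboxE.
  by rewrite ltnNge H /= andbF.
under eq_bigr => i _ do under eq_bigr => i' _ do rewrite E.
under eq_bigr => i _ do rewrite exchange_big.
by rewrite exchange_big.
Qed.

Lemma sum_sw1 n a b (F : nat -> nat) : a < n -> b < n -> a != b ->
  \sum_(p < n) F (sw a b p) = \sum_(p < n) F p.
Proof.
move=> Ha Hb ne.
have Hlt : forall p : 'I_n, sw a b p < n by move=> p; rewrite sw_lt.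
pose h (p : 'I_n) : 'I_n := Ordinal (Hlt p).
have hinj : injective h.
  move=> x y /(congr1 val) /= /(sw_inj ne) E; exact: val_inj.
by rewrite [RHS](reindex_inj hinj).
Qed.

Lemma sum_sw2 n a b (F : nat -> nat -> nat) : a < n -> b < n -> a != b ->
  \sum_(p < n) \sum_(q < n) F (sw a b p) (sw a b q) = \sum_(p < n) \sum_(q < n) F p q.
Proof.
move=> Ha Hb ne.
under eq_bigr => p _ do rewrite (sum_sw1 (F (sw a b p))) //.
exact: (sum_sw1 (fun p => \sum_(q < n) F p q)).
Qed.

Lemma sum_delta n a b c : a < n -> b < n ->
  \sum_(p < n) \sum_(q < n) (((p == a :> nat) && (q == b :> nat)) * c) = c.
Proof.
move=> Ha Hb.
rewrite (bigD1 (Ordinal Ha)) //=.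
rewrite [X in _ + X]big1 => [|p Hp]; last first.
  apply: big1 => q _. have -> : (p == a :> nat) = false.
    apply/negP => /eqP E; move: Hp; apply/negP; rewrite negbK; apply/eqP; exact: val_inj.
  by [].
rewrite addn0 (bigD1 (Ordinal Hb)) //=.
rewrite [X in _ + X]big1 => [|q Hq].
  by rewrite !eqxx mul1n addn0.
have -> : (q == b :> nat) = false.
  apply/negP => /eqP E; move: Hq; apply/negP; rewrite negbK; apply/eqP; exact: val_inj.
by rewrite andbF.
Qed.


Lemma invk_j t a b j : shp t -> boxes2 t a b j -> ent t a j < ent t b j -> adjP t j a b ->
  invk (prt t a b j) j + Lk t j b a = invk t j + Lk t j a b.
Proof.
move=> Hs B2 Eab Hadj.
have ne : a != b by case/and3P: B2.
have Ha : a < size t by case/and3P: B2 => /hasbox_lt.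
have Hb : b < size t by case/and3P: B2 => _ /hasbox_lt.
rewrite /invk size_prt.
under eq_bigr do under eq_bigr do rewrite IP_prt_j //.
set G := fun p q : nat => ([&& p != q, hasbox t p j, hasbox t q j,
   ent t (sw a b p) j < ent t (sw a b q) j & Lk t j q p] : nat).
have -> : \sum_(p < size t) \sum_(q < size t) G p q =
          \sum_(p < size t) \sum_(q < size t) G (sw a b p) (sw a b q).
  by rewrite sum_sw2.
rewrite -{1}(sum_delta (Lk t j b a) Ha Hb) -{1}(sum_delta (Lk t j a b) Ha Hb).
rewrite -!big_split /=; apply: eq_bigr => p _.
rewrite -!big_split /=; apply: eq_bigr => q _.
rewrite /G sw_neq // !(hasbox_sw _ B2) // !sw_inv // inv_key.
case: (eqVneq (p : nat) a) => [Pa|pa]; case: (eqVneq (q : nat) b) => [Qb|qb].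
- rewrite Pa Qb ne Eab sw_a sw_b //=.
  case/and3P: B2 => -> -> _ /=. rewrite !mul1n. lia.
- rewrite !andbF !mul0n !addn0.
  case pq: (p != q) => //=; case Bp: (hasbox t p j) => //=; case Bq: (hasbox t q j) => //=.
  case E: (ent t p j < ent t q j) => //=.
  congr nat_of_bool; symmetry; apply: Lk_sw_j => //; first by rewrite eq_sym.
  apply/negP => /orP[/andP[/eqP Qa /eqP Pb]|/andP[/eqP Qb' /eqP Pa']].
  + subst; move: E Eab; lia.
  + by rewrite Qb' eqxx in qb.
- rewrite !mul0n !addn0.
  case pq: (p != q) => //=; case Bp: (hasbox t p j) => //=; case Bq: (hasbox t q j) => //=.
  case E: (ent t p j < ent t q j) => //=.
  congr nat_of_bool; symmetry; apply: Lk_sw_j => //; first by rewrite eq_sym.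
  apply/negP => /orP[/andP[/eqP Qa /eqP Pb]|/andP[/eqP Qb' /eqP Pa']].
  + subst; move: E Eab; lia.
  + by rewrite Pa' eqxx in pa.
- rewrite !mul0n !addn0.
  case pq: (p != q) => //=; case Bp: (hasbox t p j) => //=; case Bq: (hasbox t q j) => //=.
  case E: (ent t p j < ent t q j) => //=.
  congr nat_of_bool; symmetry; apply: Lk_sw_j => //; first by rewrite eq_sym.
  apply/negP => /orP[/andP[/eqP Qa /eqP Pb]|/andP[/eqP Qb' /eqP Pa']].
  + subst; move: E Eab; lia.
  + by rewrite Pa' eqxx in pa.
Qed.

Definition rmax t := \max_(i < size t) size (row t i).

Lemma rmax_ge t i : size (row t i) <= rmax t.
Proof.
case: (ltnP i (size t)) => H; last by rewrite row_oob.
rewrite /rmax; exact: (@leq_bigmax _ (fun i : 'I_(size t) => size (row t i)) (Ordinal H)).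
Qed.

Lemma swap_inv t a b j : shp t -> boxes2 t a b j -> ent t a j < ent t b j -> adjP t j a b ->
  inv_count (prt t a b j) + Lk t j b a = inv_count t + Lk t j a b.
Proof.
move=> Hs B2 Eab Hadj.
have ne : a != b by case/and3P: B2.
have Eab' : ent t a j != ent t b j by rewrite neq_ltn Eab.
have HjN : j < rmax t.
  case/and3P: B2 => Ha _ _; move: Ha; rewrite hasboxE => Ha.
  exact: leq_trans Ha (rmax_ge t a).
rewrite (@inv_cols (prt t a b j) (rmax t)); last by move=> i; rewrite rowsz_prt // rmax_ge.
rewrite (@inv_cols t (rmax t)); last exact: rmax_ge.
rewrite [\sum_(k < rmax t) invk (prt t a b j) k](bigD1 (Ordinal HjN)) //.
rewrite [\sum_(k < rmax t) invk t k](bigD1 (Ordinal HjN)) //=.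
have -> : \sum_(k < rmax t | k != Ordinal HjN) invk (prt t a b j) k =
          \sum_(k < rmax t | k != Ordinal HjN) invk t k.
  apply: eq_bigr => k Hk.
  have kj : (k : nat) != j by apply: contra Hk => /eqP E; apply/eqP; exact: val_inj.
  have Ha : a < size t by case/and3P: B2 => /hasbox_lt.
  have Hb : b < size t by case/and3P: B2 => _ /hasbox_lt.
  case: (ltngtP k j) => Hkj.
  - rewrite /invk size_prt.
    under eq_bigr do under eq_bigr do rewrite IP_prt_lt //.
    by rewrite (sum_sw2 (fun p q => (inversion_pair t p q k : nat))).
  - rewrite /invk size_prt.
    by under eq_bigr do under eq_bigr do rewrite IP_prt_gt //.
  - by rewrite Hkj eqxx in kj.
have := invk_j Hs B2 Eab Hadj.
move: (invk (prt t a b j) j) (invk t j) (\sum_(k < rmax t | k != Ordinal HjN) invk t k) => x y z.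
move: (Lk t j b a : nat) (Lk t j a b : nat) => u v. lia.
Qed.


Lemma count_lt_sub (P Q : pred nat) s x : (forall y, P y -> Q y) -> x \in s -> Q x -> ~~ P x ->
  count P s < count Q s.
Proof.
move=> PQ; elim: s => [|y s IH] //= Hx Qx Px.
rewrite inE in Hx; case/orP: Hx => [/eqP E|Hx].
- subst y. rewrite (negbTE Px) Qx /= add1n ltnS. exact: sub_count.
- have := IH Hx Qx Px. case Py: (P y); first by rewrite (PQ _ Py) /=; lia.
  rewrite /=; lia.
Qed.

Definition Pbelow t j x := fun i => [&& i != x, hasbox t i j & Lk t j i x].

Lemma height_P t x j : height t x j = (count (Pbelow t j x) (iota 0 (size t))).+1.
Proof. by rewrite height_key. Qed.

Lemma height_adj t j x y : shp t -> hasbox t x j -> hasbox t y j -> x != y ->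
  height t x j = (height t y j).+1 ->
  Lk t j y x /\ (forall r, hasbox t r j -> ~~ (Lk t j y r && Lk t j r x)).
Proof.
move=> Hs Bx By xy; rewrite !height_P => [[Hh]].
have Lyx : Lk t j y x.
  case/orP: (Lk_total t j xy) => // Lxy.
  have : count (Pbelow t j x) (iota 0 (size t)) < count (Pbelow t j y) (iota 0 (size t)).
    apply: (@count_lt_sub _ _ _ x).
    - move=> i /and3P[ix Bi Lix]. apply/and3P; split => //.
      + apply/eqP => E; subst i. by rewrite Lk_asym in Lxy.
      + exact: Lk_trans Bi Bx By Lix Lxy.
    - by rewrite mem_iota add0n (hasbox_lt Bx).
    - by rewrite /Pbelow xy Bx Lxy.
    - by rewrite /Pbelow eqxx.
  by rewrite Hh ltnNge leqnSn.
split => // r Br; apply/negP => /andP[Lyr Lrx].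
pose Q := predU (Pbelow t j y) (pred1 y).
have H1 : count (Pbelow t j y) (iota 0 (size t)) < count Q (iota 0 (size t)).
  apply: (@count_lt_sub _ _ _ y).
  - by move=> i Hi; rewrite /Q /= Hi.
  - by rewrite mem_iota add0n (hasbox_lt By).
  - by rewrite /Q /= eqxx orbT.
  - by rewrite /Pbelow eqxx.
have H2 : count Q (iota 0 (size t)) < count (Pbelow t j x) (iota 0 (size t)).
  apply: (@count_lt_sub _ _ _ r).
  - move=> i; rewrite /Q /= => /orP[/and3P[iy Bi Liy]|/eqP->].
    + apply/and3P; split => //; last exact: Lk_trans Bi By Bx Liy Lyx.
      apply/eqP => E; subst i. by rewrite Lk_asym in Lyx.
    + by rewrite /Pbelow (negbTE (_ : y != x)) ?By ?Lyx // eq_sym.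
  - by rewrite mem_iota add0n (hasbox_lt Br).
  - apply/and3P; split => //. apply/eqP => E; subst r. by rewrite Lk_irr in Lrx.
  - rewrite /Q /= negb_or; apply/andP; split.
    + rewrite /Pbelow negb_and; apply/orP; right. rewrite negb_and; apply/orP; right.
      by rewrite Lk_asym.
    + apply/eqP => E; subst r. by rewrite Lk_irr in Lyr.
rewrite Hh in H2. by have := leq_ltn_trans H1 H2; rewrite ltnn.
Qed.

Lemma adj_of_between t j x y : shp t -> hasbox t x j -> hasbox t y j -> Lk t j y x ->
  (forall r, hasbox t r j -> ~~ (Lk t j y r && Lk t j r x)) -> adjP t j x y.
Proof.
move=> Hs Bx By Lyx Hb r Br rx ry; split.
- apply/idP/idP => H.
  + case/orP: (Lk_total t j ry) => // Lyr. by have := Hb r Br; rewrite Lyr H.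
  + exact: Lk_trans Br By Bx H Lyx.
- apply/idP/idP => H.
  + exact: Lk_trans By Bx Br Lyx H.
  + case/orP: (Lk_total t j rx) => // Lrx. by have := Hb r Br; rewrite Lrx H.
Qed.

Lemma adjP_sym t j a b : adjP t j a b -> adjP t j b a.
Proof. move=> H r Br rb ra. have [E1 E2] := H r Br ra rb. by split. Qed.

Lemma height_of_adj t j p q : shp t -> hasbox t p j -> hasbox t q j -> Lk t j q p ->
  (forall r, hasbox t r j -> ~~ (Lk t j q r && Lk t j r p)) ->
  height t p j = (height t q j).+1.
Proof.
move=> Hs Bp Bq Lqp Hb; rewrite !height_P; congr S.
have qp : q != p by apply/eqP => E; subst; rewrite Lk_irr in Lqp.
rewrite (@eq_count _ _ (predU (Pbelow t j q) (pred1 q))); last first.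
  move=> i; rewrite /Pbelow /=.
  case: (eqVneq i q) => [->|iq] /=; first by rewrite qp Bq Lqp.
  case: (eqVneq i p) => [->|ip] /=; first by rewrite Lk_asym // !andbF.
  rewrite orbF; case Bi: (hasbox t i j) => //=.
  apply/idP/idP => H.
  + case/orP: (Lk_total t j iq) => // Lqi. by have := Hb i Bi; rewrite Lqi H.
  + exact: Lk_trans Bi Bq Bp H Lqp.
have := count_predUI (Pbelow t j q) (pred1 q) (iota 0 (size t)).
rewrite (@eq_count _ (predI _ _) pred0); last first.
  move=> i /=; rewrite /Pbelow; case: (eqVneq i q) => [->|iq] /=; first by [].
  by rewrite andbF.
rewrite count_pred0 addn0 => ->.
have := count_uniq_mem q (iota_uniq 0 (size t)).
rewrite mem_iota add0n (hasbox_lt Bq) /= => ->. by rewrite addn1.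
Qed.


Lemma mapsize_prt t a b j : boxes2 t a b j -> map size (prt t a b j) = map size t.
Proof.
move=> B2; apply: (eq_from_nth (x0 := 0)); first by rewrite !size_map size_iota.
move=> i; rewrite (size_map size (prt t a b j)) size_prt => Hi.
rewrite !(nth_map [::]) ?size_prt //. exact: (rowsz_prt i B2).
Qed.

Lemma step_lower s s' : adm_step s s' -> shp s ->
  inv_count s' <= (inv_count s).+1 /\ map size s' = map size s.
Proof.
case=> _ [i1 [i2 [j [/and4P[ne B1 B2 E] Hh _ ->]]]] Hs.
have Bx : boxes2 s i1 i2 j by rewrite /boxes2 B1 B2 ne.
split; last exact: mapsize_prt.
have Hadj : adjP s j i1 i2.
  case/orP: Hh => /eqP Hh.
  - have [L HB] := height_adj Hs B1 B2 ne Hh. exact: adj_of_between.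
  - have ne' : i2 != i1 by rewrite eq_sym.
    have [L HB] := height_adj Hs B2 B1 ne' Hh. apply: adjP_sym. exact: adj_of_between.
have := swap_inv Hs Bx E Hadj.
have : (Lk s j i1 i2 : nat) <= 1 by case: (Lk s j i1 i2).
move: (inv_count (prt s i1 i2 j)) (inv_count s) (Lk s j i2 i1 : nat) (Lk s j i1 i2 : nat).
move=> x y u v; lia.
Qed.

Lemma colw_chain t i i' k : shp t -> col_weak t -> i <= i' -> hasbox t i' k ->
  ent t i k <= ent t i' k.
Proof.
move=> Hs Hc Hii; rewrite -(subnKC Hii).
elim: (i' - i) => [|d IH]; first by rewrite addn0.
move=> B. rewrite addnS in B *.
have B' : hasbox t (i + d) k by apply: box_below B; lia.
exact: leq_trans (IH B') (Hc _ _ B).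
Qed.

Lemma nth_suf t i k m : nth 0 (suf t i k) m = ent t i (k.+1 + m).
Proof. by rewrite /suf nth_drop. Qed.

Lemma size_suf t i k : size (suf t i k) = size (row t i) - k.+1.
Proof. by rewrite /suf size_drop. Qed.

Lemma inv0_S t : shp t -> col_weak t -> inv_count t = 0.
Proof.
move=> Hs Hc; rewrite /inv_count.
apply: big1 => p _; apply: big1 => q _; apply: big1 => k _.
apply/eqP; rewrite eqb0 inv_key; apply/negP => /and5P[pq Bp Bq E L].
case: (ltnP q p) => H.
  have := colw_chain Hs Hc (ltnW H) Bp. lia.
have H' : p < q by rewrite ltn_neqAle pq H.
rewrite /Lk (keylt_le_false H') // in L.
move=> m; rewrite leq_min !size_suf => /andP[m1 m2].
rewrite !nth_suf; apply: (colw_chain Hs Hc (ltnW H')).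
by rewrite hasboxE; lia.
Qed.

Lemma sum_pos n (F : 'I_n -> nat) i : 0 < F i -> 0 < \sum_(j < n) F j.
Proof. move=> H; rewrite (bigD1 i) //=; exact: leq_trans H (leq_addr _ _). Qed.

Lemma IP_pos t p q k : inversion_pair t p q k -> 0 < inv_count t.
Proof.
move=> H; have := H; rewrite inv_key => /and5P[_ Bp Bq _ _].
rewrite /inv_count.
apply: (@sum_pos _ _ (Ordinal (hasbox_lt Bp))).
apply: (@sum_pos _ _ (Ordinal (hasbox_lt Bq))).
have Bp' : k < size (row t p) by rewrite -hasboxE.
apply: (@sum_pos _ _ (Ordinal Bp')). by rewrite /= H.
Qed.

Lemma inv0_colweak t : shp t -> inv_count t = 0 -> col_weak t.
Proof.
move=> Hs H0.
suff S : forall d k, rmax t <= k + d -> forall i, hasbox t i.+1 k -> ent t i k <= ent t i.+1 k.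
  move=> i k; apply: (S (rmax t)); lia.
elim=> [|d IH] k Hk i B.
  move: B; rewrite hasboxE => B. have := rmax_ge t i.+1. lia.
rewrite leqNgt; apply/negP => E.
have Bi : hasbox t i k by apply: box_below B.
suff : inversion_pair t i.+1 i k by move=> /IP_pos; rewrite H0.
rewrite inv_key (negbTE (_ : i.+1 != i)) ?B ?Bi ?E /=; last by rewrite neq_ltn ltnSn orbT.
apply: keylt_le_true => // m; rewrite leq_min !size_suf => /andP[m1 m2].
rewrite !nth_suf; apply: (IH (k.+1 + m)); first lia.
by rewrite hasboxE; lia.
Qed.


Lemma column_cons r t j : column (r :: t) j =
  if j < size r then nth 0 r j :: column t j else column t j.
Proof. by rewrite /column /=; case: ifP. Qed.

Lemma shp_tail r t : shp (r :: t) -> shp t.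
Proof. rewrite /shp /=; exact: path_sorted. Qed.

Lemma colw_tail r t : col_weak (r :: t) -> col_weak t.
Proof. move=> H i j B; exact: (H i.+1 j B). Qed.

Lemma col_nth t i j : shp t -> hasbox t i j -> nth 0 (column t j) i = ent t i j.
Proof.
elim: t i => [|r t IH] i Hs B; first by move: B; rewrite /hasbox.
have Hr : j < size r.
  have := shp_le Hs (leq0n i). move: B; rewrite hasboxE /row /= => B. lia.
rewrite column_cons Hr; case: i B => [|i] B //=.
apply: IH; first exact: shp_tail Hs.
move: B; rewrite /hasbox /= ltnS //.
Qed.

Lemma col_nil t j : shp t -> size (row t 0) <= j -> column t j = [::].
Proof.
elim: t => [|r t IH] //= Hs Hj.
rewrite column_cons ltnNge Hj /=. apply: IH; first exact: shp_tail Hs.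
have := shp_le Hs (leq0n 1). rewrite /row /= in Hj *. lia.
Qed.

Lemma col_sorted t j : shp t -> col_weak t -> sorted leq (column t j).
Proof.
elim: t => [|r t IH] //= Hs Hc.
have IH' := IH (shp_tail Hs) (colw_tail Hc).
rewrite column_cons; case: ifP => Hr //.
case: t Hs Hc IH IH' => [|r' t] Hs Hc _ IH'; first by rewrite /column.
rewrite column_cons in IH' *; case Hr': (j < size r'); rewrite Hr' in IH'.
- rewrite /= in IH' *. rewrite IH' andbT.
  have := Hc 0 j. rewrite /hasbox /ent /row /= Hr'. by apply.
- rewrite col_nil //; first exact: shp_tail (shp_tail Hs).
  have := shp_le (shp_tail Hs) (leq0n 1). rewrite /row /= in Hr' *. lia.
Qed.

Lemma st_id t : shp t -> col_weak t -> st t = t.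
Proof.
move=> Hs Hc; apply: (eq_from_nth (x0 := [::])); first by rewrite size_mkseq.
move=> i; rewrite size_mkseq => Hi; rewrite nth_mkseq //.
apply: (eq_from_nth (x0 := 0)); first by rewrite size_mkseq.
move=> j; rewrite size_mkseq => Hj; rewrite nth_mkseq //.
rewrite sorted_sort; last exact: col_sorted.
  rewrite col_nth //; by rewrite /hasbox Hi.
exact: leq_trans.
Qed.


Lemma rsP t : row_standard t <-> (forall i k, hasbox t i k.+1 -> ent t i k < ent t i k.+1).
Proof.
split.
- move=> /(all_nthP [::]) H i k /andP[Hi Hk].
  have := H i Hi => /(sortedP 0) /(_ k Hk). by [].
- move=> H; apply/(all_nthP [::]) => i Hi; apply/(sortedP 0) => k Hk.
  apply: (H i k); by rewrite /hasbox Hi.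
Qed.

Lemma Lk_next t j p q : row_standard t -> shp t -> hasbox t p j.+1 -> Lk t j q p ->
  ent t q j < ent t p j.+1.
Proof.
move=> /rsP Hr Hs Bp; rewrite /Lk (sufE t p) (sufE t q).
move: (Bp); rewrite hasboxE => Bp'; rewrite Bp'.
case: ifP => Bq /=.
- move=> H; have Hq : ent t q j < ent t q j.+1 by apply: Hr; rewrite hasboxE Bq.
  case/orP: H => [H|/andP[/eqP E _]]; [exact: ltn_trans Hq H | by rewrite -E].
- move=> H; have := shp_le Hs (ltnW H). move: Bq => /negbT. rewrite -leqNgt. lia.
Qed.

Lemma exists_IP t : 0 < inv_count t -> exists p q k, inversion_pair t p q k.
Proof.
move=> Hpos; apply: NNPP => H.
suff : inv_count t = 0 by move=> E; rewrite E in Hpos.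
apply: big1 => p _; apply: big1 => q _; apply: big1 => k _.
apply/eqP; rewrite eqb0; apply/negP => HI; apply: H; by exists p, q, k.
Qed.

Definition btw t j p q := fun r => [&& hasbox t r j, Lk t j q r & Lk t j r p].

Lemma exists_adj t j p q : shp t -> inversion_pair t p q j ->
  exists p' q', inversion_pair t p' q' j /\
    (forall r, hasbox t r j -> ~~ (Lk t j q' r && Lk t j r p')).
Proof.
move=> Hs.
move: {2}(count (btw t j p q) (iota 0 (size t))) (leqnn (count (btw t j p q) (iota 0 (size t)))).
move=> m; elim: m p q => [|m IH] p q Hc HI.
- exists p, q; split => // r Br; apply/negP => Hb.
  have : 0 < count (btw t j p q) (iota 0 (size t)).
    rewrite -has_count; apply/hasP; exists r; first by rewrite mem_iota add0n (hasbox_lt Br).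
    by rewrite /btw Br.
  lia.
case: (boolP (has (btw t j p q) (iota 0 (size t)))) => [/hasP[r Hr Hbr]|Hn]; last first.
  exists p, q; split => // r Br; apply/negP => Hb.
  move/hasPn: Hn => /(_ r); rewrite mem_iota add0n (hasbox_lt Br) /btw Br Hb => /(_ isT).
  by [].
have := HI; rewrite inv_key => /and5P[pq Bp Bq E Lqp].
case/and3P: Hbr => Br Lqr Lrp.
case: (ltnP (ent t r j) (ent t q j)) => Erq.
- apply: (IH r q) => //.
  + rewrite -ltnS; apply: leq_trans Hc; apply: (@count_lt_sub _ _ _ r) => //.
    * move=> x /and3P[Bx Lqx Lxr]; rewrite /btw Bx Lqx /=. exact: Lk_trans Bx Br Bp Lxr Lrp.
    * by rewrite /btw Br Lqr Lrp.
    * by rewrite /btw Lk_irr !andbF.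
  + rewrite inv_key Br Bq Erq Lqr /= andbT. apply/eqP => Eq; subst r; by rewrite Lk_irr in Lqr.
- apply: (IH p r) => //.
  + rewrite -ltnS; apply: leq_trans Hc; apply: (@count_lt_sub _ _ _ r) => //.
    * move=> x /and3P[Bx Lrx Lxp]; rewrite /btw Bx Lxp andbT. exact: Lk_trans Bq Br Bx Lqr Lrx.
    * by rewrite /btw Br Lqr Lrp.
    * by rewrite /btw Lk_irr !andbF.
  + rewrite inv_key Bp Br Lrp (leq_trans E Erq) /= andbT.
    apply/eqP => Eq; subst r; by rewrite Lk_irr in Lrp.
Qed.


Lemma sw_comm a b x : a != b -> sw b a x = sw a b x.
Proof.
move=> ne; rewrite /sw.
case: (eqVneq x a) => [->|xa]; first by rewrite (negbTE ne).
by case: (eqVneq x b).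
Qed.

Lemma boxes2_prt t a b j : boxes2 t a b j -> boxes2 (prt t a b j) b a j.
Proof.
move=> B2; have := B2; case/and3P => Ha Hb ne.
by rewrite /boxes2 !hasbox_prt // Ha Hb eq_sym ne.
Qed.

Lemma prt_inv t a b j : boxes2 t a b j -> prt (prt t a b j) b a j = t.
Proof.
move=> B2; have B2' := boxes2_prt B2.
have ne : a != b by case/and3P: B2.
apply: (eq_from_nth (x0 := [::])); first by rewrite !size_prt.
move=> i _; rewrite -/(row _ i) -/(row t i).
rewrite -(cat_take_drop j.+1 (row (prt _ b a j) i)) -(cat_take_drop j.+1 (row t i)).
rewrite take_prt // drop_prt // take_prt // drop_prt //.
by rewrite (sw_comm i ne) sw_inv.
Qed.

Lemma col_iota t k : column t k =
  [seq ent t i k | i <- [seq i <- iota 0 (size t) | k < size (row t i)]].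
Proof.
by rewrite /column -{1}(mkseq_nth [::] t) /mkseq filter_map -map_comp.
Qed.

Lemma perm_col_prt t a b j k : boxes2 t a b j ->
  perm_eq (column (prt t a b j) k) (column t k).
Proof.
move=> B2; have ne : a != b by case/and3P: B2.
have Ha : a < size t by case/and3P: B2 => /hasbox_lt.
have Hb : b < size t by case/and3P: B2 => _ /hasbox_lt.
rewrite !col_iota size_prt.
rewrite (@eq_filter _ (fun i => k < size (row (prt t a b j) i)) (fun i => k < size (row t i)));
  last by move=> i; rewrite rowsz_prt.
case: (leqP k j) => Hk.
- rewrite (@eq_map _ _ (fun i => ent (prt t a b j) i k) (fun i => ent t (sw a b i) k));
    last by move=> i; rewrite ent_prt_le.
  rewrite (map_comp (fun i => ent t i k) (sw a b)).
  apply: perm_map; apply: uniq_perm.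
  + by rewrite (map_inj_uniq (sw_inj ne)) filter_uniq // iota_uniq.
  + by rewrite filter_uniq // iota_uniq.
  + move=> x; rewrite -{1}(sw_inv x ne) (mem_map (sw_inj ne)) !mem_filter !mem_iota !add0n.
    rewrite (sw_lt _ Ha Hb) -!hasboxE. by rewrite (hasbox_sw _ B2) // andbC [in RHS]andbC.
- rewrite (@eq_map _ _ (fun i => ent (prt t a b j) i k) (fun i => ent t i k)) //.
  by move=> i; rewrite ent_prt_gt.
Qed.

Lemma st_prt t a b j : boxes2 t a b j -> st (prt t a b j) = st t.
Proof.
move=> B2; rewrite /st size_prt; apply: eq_mkseq => i.
rewrite rowsz_prt //; apply: eq_mkseq => k.
congr nth; apply/perm_sortP; [exact: leq_total | exact: leq_trans | exact: anti_leq |].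
exact: perm_col_prt.
Qed.


Lemma height_prt t a b j i : boxes2 t a b j -> height (prt t a b j) i j = height t i j.
Proof.
move=> B2; rewrite !height_key size_prt; congr S; apply: eq_count => x.
by rewrite hasbox_prt // Lk_prt_ge.
Qed.

Lemma step_back t : shp t -> row_standard t -> 0 < inv_count t ->
  exists t', [/\ adm_step t' t, (inv_count t').+1 = inv_count t, shp t',
                 row_standard t' & st t' = st t].
Proof.
move=> Hs Hr Hpos.
have [p0 [q0 [j HI0]]] := exists_IP Hpos.
have [p [q [HI Hb]]] := exists_adj Hs HI0.
have := HI; rewrite inv_key => /and5P[pq Bp Bq E Lqp].
have B2 : boxes2 t p q j by rewrite /boxes2 Bp Bq pq.
have Hadj : adjP t j p q by apply: adj_of_between.
have Hsw := swap_inv Hs B2 E Hadj.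
rewrite Lqp (Lk_asym Lqp) /= addn0 addn1 in Hsw.
have B2' := boxes2_prt B2.
have qp : q != p by rewrite eq_sym.
have Hs' : shp (prt t p q j) by rewrite /shp mapsize_prt.
have Hr' : row_standard (prt t p q j).
  apply/rsP => i k; rewrite hasbox_prt // => B.
  case: (ltngtP k j) => Hk.
  - rewrite !ent_prt_le //; try lia. apply: (proj1 (rsP t) Hr). by rewrite (hasbox_sw _ B2) //; lia.
  - rewrite !ent_prt_gt //; try lia. exact: (proj1 (rsP t) Hr).
  - subst k. rewrite ent_prt_le // ent_prt_gt //.
    case: (eqVneq i p) => [Ei|ip]; [subst i; rewrite sw_a|].
    + exact: Lk_next Hr Hs B Lqp.
    case: (eqVneq i q) => [Ei|iq]; [subst i; rewrite sw_b //|].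
    + exact: ltn_trans E (proj1 (rsP t) Hr _ _ B).
    rewrite (sw_id ip iq). exact: (proj1 (rsP t) Hr).
exists (prt t p q j); split => //; last exact: st_prt.
split => //; exists q, p, j; split.
- rewrite qp !hasbox_prt // Bq Bp /= !ent_prt_le // sw_a sw_b //.
- rewrite !height_prt //. by rewrite (height_of_adj Hs Bp Bq Lqp Hb) eqxx orbT.
- rewrite /admissible_at !hasbox_prt //.
  rewrite !(fun i => @ent_prt_le t p q j i j B2 (leqnn j)) !(fun i => @ent_prt_gt t p q j i j.+1 B2 (ltnSn j)) sw_a sw_b //.
  apply/andP; split; apply/implyP => B.
  + have H := proj1 (rsP t) Hr _ _ B. by rewrite H (ltn_trans E H).
  + rewrite (proj1 (rsP t) Hr _ _ B) /=. exact: Lk_next Hr Hs B Lqp.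
- by rewrite prt_inv.
Qed.

Lemma reach_snoc n s s1 s2 : reach n s s1 -> adm_step s1 s2 -> reach n.+1 s s2.
Proof.
elim: n s => [|n IH] s /=.
- move=> -> H; exists s2; split => //.
- move=> [s' [H1 H2]] H; exists s'; split => //; exact: IH.
Qed.

Lemma upper n t : inv_count t = n -> shp t -> row_standard t -> reach n (st t) t.
Proof.
elim: n t => [|n IH] t Hn Hs Hr.
- by rewrite /= st_id //; apply: inv0_colweak.
- have [t' [Hst Hinv Hs' Hr' Est]] := step_back Hs Hr (ltac:(by rewrite Hn)).
  rewrite -Est; apply: reach_snoc Hst.
  apply: IH => //. rewrite Hn in Hinv. by case: Hinv.
Qed.

Lemma lower n s t : reach n s t -> shp s -> inv_count t <= inv_count s + n.
Proof.
elim: n s => [|n IH] s /=.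
- by move=> -> _; rewrite addn0.
- move=> [s1 [H1 H2]] Hs.
  have [Hi Hm] := step_lower H1 Hs.
  have Hs1 : shp s1 by rewrite /shp Hm.
  have := IH _ H2 Hs1. lia.
Qed.

Unset Implicit Arguments.

Theorem mainTheorem8 (lam mu : seq nat) (T tau : filling) :
  is_shape lam -> is_content lam mu ->
  in_S lam mu T ->
  is_filling lam mu tau -> row_standard tau -> st tau = T ->
  (exists n, reach n T tau) /\
  reach (inv_count tau) T tau /\
  (forall n, reach n T tau -> inv_count tau <= n).
Proof.
move=> [Hlam _] _ [[HT _] [HrT HcT]] [Htau _] Hr Hst.
have HsT : shp T by rewrite /shp HT.
have Hs : shp tau by rewrite /shp Htau.
have Hreach : reach (inv_count tau) T tau by rewrite -Hst; apply: upper.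
split; first by exists (inv_count tau).
split => // n Hn.
have := lower Hn HsT. by rewrite (inv0_S HsT HcT).
Qed.
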